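(* Let $a,b\in(0,+\infty)$ satisfy $1<a-b$. Let $\varepsilon$ satisfy $$0<\varepsilon<\min\left\{1;\ \frac{a-1-b}{224\,b}\right\}.$$ Define $\varphi:\mathbb{R}\to\mathbb{R}$ by $$\varphi(t)=\begin{cases}\frac{3}{2}\pi & \text{if } t\in(-\infty,1],\\ \frac{3}{2}\pi+\varepsilon\ln\ln\big(e+(t-1)^4\big) & \text{if } t\in(1,+\infty),\end{cases}$$ and define $g$ on $[0,+\infty)$ by $g(t)=t^{a+b\sin(\varphi(t))}$. Then the following hold. (i) $g:[0,+\infty)\to[0,+\infty)$, $g(0)=0$, and $g(t)>0$ for $t>0$. (ii) $g\in C^1([0,+\infty))\cap C^2((0,+\infty))$. (iii) $\lim_{t\to0^+}\frac{g(t)}{t}=0$, $\lim_{t\to+\infty}\frac{g(t)}{t}=+\infty$, and $g'(0)=0$. (iv) For every $t>0$, $$0<\{-8b\varepsilon+a-b\}\frac{g(t)}{t}\le g'(t)\le\{8b\varepsilon+a+b\}\frac{g(t)}{t}.$$ (v) For every $t>0$, $$0<\{-8b\varepsilon+a-b\}\,t^{a-b-1}\le g'(t)\le\{8b\varepsilon+a+b\}\,[t^{a-b-1}+t^{a+b-1}].$$ (vi) For every $t>0$, $$0<\{-224b\varepsilon+a-1-b\}\frac{g'(t)}{t}\le g''(t)\le\{224b\varepsilon+a-1+b\}\frac{g'(t)}{t}.$$ (vii) $g$ is strictly convex on $[0,+\infty)$.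
   Context: Here $e$ is Euler's number and $\ln$ the natural logarithm. *)

(* Defs.v *)
From Stdlib Require Import Reals.
From Coquelicot Require Import Coquelicot.
Open Scope R_scope.

Definition phi (eps t : R) : R :=
  if Rle_dec t 1 then 3 / 2 * PI
  else 3 / 2 * PI + eps * ln (ln (exp 1 + (t - 1) ^ 4)).

(* g(t) = t^(a + b sin(phi t)) for t > 0, g(0) = 0 (and 0 for t < 0, which is
   outside the domain [0,+oo) and never used). *)
Definition g (a b eps t : R) : R :=
  if Rlt_dec 0 t then Rpower t (a + b * sin (phi eps t)) else 0.

(* Main.v *)
Require Import Defs.
From Stdlib Require Import Reals Lra Psatz.
From Coquelicot Require Import Coquelicot.
Open Scope R_scope.

Definition glue (f1 f2 : R -> R) (c x : R) : R :=
  if Rle_dec x c then f1 x else f2 x.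

Lemma locally_lt (x c : R) : x < c -> locally x (fun y => y < c).
Proof.
intros H. assert (Hp : 0 < c - x) by lra.
exists (mkposreal _ Hp). intros y Hy.
unfold ball in Hy; simpl in Hy; unfold AbsRing_ball, abs, minus, plus, opp in Hy; simpl in Hy.
apply Rabs_def2 in Hy. lra.
Qed.

Lemma locally_gt (x c : R) : c < x -> locally x (fun y => c < y).
Proof.
intros H. assert (Hp : 0 < x - c) by lra.
exists (mkposreal _ Hp). intros y Hy.
unfold ball in Hy; simpl in Hy; unfold AbsRing_ball, abs, minus, plus, opp in Hy; simpl in Hy.
apply Rabs_def2 in Hy. lra.
Qed.

Lemma glue_derive (f1 f2 d1 d2 : R -> R) (c : R) :
  (forall x, is_derive f1 x (d1 x)) -> (forall x, is_derive f2 x (d2 x)) ->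
  f1 c = f2 c -> d1 c = d2 c ->
  forall x, is_derive (glue f1 f2 c) x (glue d1 d2 c x).
Proof.
intros D1 D2 E1 E2 x.
destruct (Rtotal_order x c) as [Hx|[Hx|Hx]].
- unfold glue at 2. destruct (Rle_dec x c); [|lra].
  apply is_derive_ext_loc with f1; [|apply D1].
  generalize (locally_lt x c Hx). apply filter_imp. intros y Hy.
  unfold glue. destruct (Rle_dec y c); lra.
- subst x. unfold glue at 2. destruct (Rle_dec c c); [|lra].
  apply is_derive_Reals. intros e He.
  destruct (proj1 (is_derive_Reals _ _ _) (D1 c) e He) as [d1' H1].
  destruct (proj1 (is_derive_Reals _ _ _) (D2 c) e He) as [d2' H2].
  assert (Hm : 0 < Rmin d1' d2') by (apply Rmin_pos; apply cond_pos).
  exists (mkposreal _ Hm). intros h Hh0 Hh. simpl in Hh.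
  unfold glue. destruct (Rle_dec c c); [|lra].
  destruct (Rle_dec (c + h) c).
  + apply H1; auto. apply Rlt_le_trans with (1 := Hh). apply Rmin_l.
  + rewrite E1. rewrite E2. apply H2; auto. apply Rlt_le_trans with (1 := Hh). apply Rmin_r.
- unfold glue at 2. destruct (Rle_dec x c); [lra|].
  apply is_derive_ext_loc with f2; [|apply D2].
  generalize (locally_gt x c Hx). apply filter_imp. intros y Hy.
  unfold glue. destruct (Rle_dec y c); lra.
Qed.

Definition hh (t : R) := if Rle_dec t 1 then 0 else (t - 1) ^ 4.
Definition hh1 (t : R) := if Rle_dec t 1 then 0 else 4 * (t - 1) ^ 3.
Definition hh2 (t : R) := if Rle_dec t 1 then 0 else 12 * (t - 1) ^ 2.
Definition hh3 (t : R) := if Rle_dec t 1 then 0 else 24 * (t - 1).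

Lemma hh_derive t : is_derive hh t (hh1 t).
Proof.
apply (glue_derive (fun _ => 0) (fun t => (t-1)^4) (fun _ => 0) (fun t => 4*(t-1)^3) 1).
- intros; auto_derive; auto; ring.
- intros; auto_derive; auto; ring.
- ring. - ring.
Qed.
Lemma hh1_derive t : is_derive hh1 t (hh2 t).
Proof.
apply (glue_derive (fun _ => 0) (fun t => 4*(t-1)^3) (fun _ => 0) (fun t => 12*(t-1)^2) 1).
- intros; auto_derive; auto; ring.
- intros; auto_derive; auto; ring.
- ring. - ring.
Qed.
Lemma hh2_derive t : is_derive hh2 t (hh3 t).
Proof.
apply (glue_derive (fun _ => 0) (fun t => 12*(t-1)^2) (fun _ => 0) (fun t => 24*(t-1)) 1).
- intros; auto_derive; auto; ring.
- intros; auto_derive; auto; ring.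
- ring. - ring.
Qed.
Lemma hh_nonneg t : 0 <= hh t.
Proof. unfold hh; destruct (Rle_dec t 1). lra. apply pow_le. lra. Qed.

Lemma exp1_gt2 : 2 < exp 1.
Proof. generalize (exp_ineq1 1). lra. Qed.

Lemma Derive_hh t : Derive (fun x => hh x) t = hh1 t.
Proof. apply is_derive_unique; apply hh_derive. Qed.
Lemma Derive_hh1 t : Derive (fun x => hh1 x) t = hh2 t.
Proof. apply is_derive_unique; apply hh1_derive. Qed.

Definition S t := exp 1 + hh t.
Definition Lg t := ln (S t).
Lemma S_ge t : exp 1 <= S t.
Proof. unfold S; generalize (hh_nonneg t); lra. Qed.
Lemma S_pos t : 0 < S t.
Proof. generalize (S_ge t) exp1_gt2; lra. Qed.
Lemma Lg_ge1 t : 1 <= Lg t.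
Proof. unfold Lg. rewrite <- (ln_exp 1). apply ln_le. apply exp_pos. apply S_ge. Qed.

Definition Phi eps t := 3/2*PI + eps * ln (Lg t).
Definition Phi1 eps t := eps * (hh1 t / (S t * Lg t)).
Definition Phi2 eps t := eps * (hh2 t / (S t * Lg t) - hh1 t * (hh1 t * (Lg t + 1)) / (S t * Lg t)^2).

Lemma Phi_derive eps t : is_derive (Phi eps) t (Phi1 eps t).
Proof.
unfold Phi, Phi1, Lg, S. generalize (S_pos t) (Lg_ge1 t); unfold Lg, S; intros.
auto_derive.
- repeat split; auto. exists (hh1 t); apply hh_derive. lra.
- rewrite (Derive_hh t). field. split; lra.
Qed.

Lemma ex_hh t : ex_derive (fun x => hh x) t.
Proof. exists (hh1 t); apply hh_derive. Qed.
Lemma ex_hh1 t : ex_derive (fun x => hh1 x) t.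
Proof. exists (hh2 t); apply hh1_derive. Qed.
Lemma ex_hh2 t : ex_derive (fun x => hh2 x) t.
Proof. exists (hh3 t); apply hh2_derive. Qed.
Lemma SL_pos t : 0 < (exp 1 + hh t) * ln (exp 1 + hh t).
Proof. generalize (S_pos t) (Lg_ge1 t); unfold Lg, S; intros; apply Rmult_lt_0_compat; lra. Qed.

Ltac side := repeat match goal with |- _ /\ _ => split end;
  try exact I; try apply ex_hh; try apply ex_hh1; try apply ex_hh2;
  try (apply Rgt_not_eq, SL_pos); try (apply Rgt_not_eq; apply S_pos);
  try (match goal with |- context [hh ?x] => generalize (S_pos x) (Lg_ge1 x) end; unfold Lg, S; intros; lra).

Lemma Phi1_derive eps t : is_derive (Phi1 eps) t (Phi2 eps t).
Proof.
unfold Phi1, Phi2, Lg, S. generalize (S_pos t) (Lg_ge1 t); unfold Lg, S; intros.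
auto_derive.
- side.
- rewrite (Derive_hh t), (Derive_hh1 t). field. split; lra.
Qed.

Lemma phi_eq eps t : phi eps t = Phi eps t.
Proof.
unfold phi, Phi, Lg, S, hh. destruct (Rle_dec t 1).
- rewrite Rplus_0_r, ln_exp, ln_1. ring.
- reflexivity.
Qed.

Lemma Phi1_le1 eps t : t <= 1 -> Phi1 eps t = 0.
Proof. intros; unfold Phi1, hh1; destruct (Rle_dec t 1); [|lra]. unfold Rdiv; ring. Qed.
Lemma Phi2_le1 eps t : t <= 1 -> Phi2 eps t = 0.
Proof. intros; unfold Phi2, hh1, hh2; destruct (Rle_dec t 1); [|lra]. unfold Rdiv; ring. Qed.
Lemma Phi_le1 eps t : t <= 1 -> Phi eps t = 3/2*PI.
Proof. intros; rewrite <- phi_eq; unfold phi; destruct (Rle_dec t 1); [|lra]. auto. Qed.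

Lemma ex_Phi eps t : ex_derive (fun x => Phi eps x) t.
Proof. exists (Phi1 eps t); apply Phi_derive. Qed.
Lemma ex_Phi1 eps t : ex_derive (fun x => Phi1 eps x) t.
Proof. exists (Phi2 eps t); apply Phi1_derive. Qed.
Lemma Derive_Phi eps t : Derive (fun x => Phi eps x) t = Phi1 eps t.
Proof. apply is_derive_unique; apply Phi_derive. Qed.
Lemma Derive_Phi1 eps t : Derive (fun x => Phi1 eps x) t = Phi2 eps t.
Proof. apply is_derive_unique; apply Phi1_derive. Qed.

Definition P a b eps t := a + b * sin (Phi eps t).
Definition P1 b eps t := b * cos (Phi eps t) * Phi1 eps t.
Definition P2 b eps t := b * (- sin (Phi eps t) * Phi1 eps t ^ 2 + cos (Phi eps t) * Phi2 eps t).

Lemma ex_Phi2 eps t : ex_derive (fun x => Phi2 eps x) t.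
Proof.
unfold Phi2, Lg, S. auto_derive. side. rewrite Rmult_1_r. generalize (SL_pos t); intro; apply Rgt_not_eq; apply Rmult_lt_0_compat; auto.
Qed.

Ltac exP := match goal with
 | |- ex_derive (fun x => Phi _ x) _ => apply ex_Phi
 | |- ex_derive (fun x => Phi1 _ x) _ => apply ex_Phi1
 | |- ex_derive (fun x => Phi2 _ x) _ => apply ex_Phi2
 end.

Lemma P_derive a b eps t : is_derive (P a b eps) t (P1 b eps t).
Proof.
unfold P, P1. auto_derive. apply ex_Phi. rewrite Derive_Phi. ring.
Qed.
Lemma P1_derive b eps t : is_derive (P1 b eps) t (P2 b eps t).
Proof.
unfold P1, P2. auto_derive. split; [apply ex_Phi|split; [apply ex_Phi1|exact I]].
rewrite Derive_Phi, Derive_Phi1. ring.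
Qed.
Lemma ex_P2 b eps t : ex_derive (fun x => P2 b eps x) t.
Proof.
unfold P2. auto_derive. repeat split; try exact I; exP.
Qed.
Lemma ex_P a b eps t : ex_derive (fun x => P a b eps x) t.
Proof. exists (P1 b eps t); apply P_derive. Qed.
Lemma ex_P1 b eps t : ex_derive (fun x => P1 b eps x) t.
Proof. exists (P2 b eps t); apply P1_derive. Qed.
Lemma Derive_P a b eps t : Derive (fun x => P a b eps x) t = P1 b eps t.
Proof. apply is_derive_unique; apply P_derive. Qed.
Lemma Derive_P1 b eps t : Derive (fun x => P1 b eps x) t = P2 b eps t.
Proof. apply is_derive_unique; apply P1_derive. Qed.

Ltac exQ := match goal with
 | |- ex_derive (fun x => P _ _ _ x) _ => apply ex_P
 | |- ex_derive (fun x => P1 _ _ x) _ => apply ex_P1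
 | |- ex_derive (fun x => P2 _ _ x) _ => apply ex_P2
 | |- _ => assumption
 end.

Definition Q a b eps t := P a b eps t + t * ln t * P1 b eps t.
Definition Q1 b eps t := P1 b eps t + (ln t + 1) * P1 b eps t + t * ln t * P2 b eps t.

Lemma Q_derive a b eps t : 0 < t -> is_derive (Q a b eps) t (Q1 b eps t).
Proof.
intros Ht. unfold Q, Q1. auto_derive.
- repeat split; try exact I; exQ.
- rewrite Derive_P, Derive_P1. field. lra.
Qed.
Lemma ex_Q1 b eps t : 0 < t -> ex_derive (fun x => Q1 b eps x) t.
Proof.
intros Ht. unfold Q1. auto_derive.
repeat split; try exact I; exQ.
Qed.
Lemma ex_Q a b eps t : 0 < t -> ex_derive (fun x => Q a b eps x) t.
Proof. intros; exists (Q1 b eps t); apply Q_derive; auto. Qed.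
Lemma Derive_Q a b eps t : 0 < t -> Derive (fun x => Q a b eps x) t = Q1 b eps t.
Proof. intros; apply is_derive_unique; apply Q_derive; auto. Qed.

Definition E a b eps t := exp (P a b eps t * ln t).

Lemma E_derive a b eps t : 0 < t -> is_derive (E a b eps) t (E a b eps t * Q a b eps t / t).
Proof.
intros Ht. unfold E, Q. auto_derive.
- repeat split; try exact I; exQ.
- rewrite Derive_P. field. lra.
Qed.
Lemma ex_E a b eps t : 0 < t -> ex_derive (fun x => E a b eps x) t.
Proof. intros; eexists; apply E_derive; auto. Qed.
Lemma Derive_E a b eps t : 0 < t -> Derive (fun x => E a b eps x) t = E a b eps t * Q a b eps t / t.
Proof. intros; apply is_derive_unique; apply E_derive; auto. Qed.

Lemma g_E a b eps t : 0 < t -> g a b eps t = E a b eps t.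
Proof.
intros Ht. unfold g, E, P, Rpower. destruct (Rlt_dec 0 t); [|lra]. rewrite phi_eq. reflexivity.
Qed.
Lemma g_loc a b eps t : 0 < t -> locally t (fun x => E a b eps x = g a b eps x).
Proof.
intros Ht. generalize (locally_gt t 0 Ht). apply filter_imp. intros; symmetry; apply g_E; auto.
Qed.

Ltac exG := match goal with
 | |- ex_derive (fun x => P _ _ _ x) _ => apply ex_P
 | |- ex_derive (fun x => P1 _ _ x) _ => apply ex_P1
 | |- ex_derive (fun x => P2 _ _ x) _ => apply ex_P2
 | |- ex_derive (fun x => E _ _ _ x) _ => apply ex_E; assumption
 | |- ex_derive (fun x => Q _ _ _ x) _ => apply ex_Q; assumption
 | |- ex_derive (fun x => Q1 _ _ x) _ => apply ex_Q1; assumption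
 | |- _ <> 0 => apply Rgt_not_eq; assumption
 | |- _ => assumption
 end.

Definition G1 a b eps t := g a b eps t * Q a b eps t / t.
Definition G2 a b eps t := g a b eps t / t * (Q a b eps t * (Q a b eps t - 1) / t + Q1 b eps t).

Lemma G_derive a b eps t : 0 < t -> is_derive (g a b eps) t (G1 a b eps t).
Proof.
intros Ht. apply is_derive_ext_loc with (E a b eps). apply g_loc; auto.
unfold G1. rewrite g_E by auto. apply E_derive; auto.
Qed.

Lemma G1_loc a b eps t : 0 < t ->
  locally t (fun x => E a b eps x * Q a b eps x / x = G1 a b eps x).
Proof.
intros Ht. generalize (locally_gt t 0 Ht). apply filter_imp. intros; unfold G1; rewrite g_E; auto.
Qed.
Lemma G2_loc a b eps t : 0 < t ->
  locally t (fun x => E a b eps x / x * (Q a b eps x * (Q a b eps x - 1) / x + Q1 b eps x) = G2 a b eps x).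
Proof.
intros Ht. generalize (locally_gt t 0 Ht). apply filter_imp. intros; unfold G2; rewrite g_E; auto.
Qed.

Lemma G1_derive a b eps t : 0 < t -> is_derive (G1 a b eps) t (G2 a b eps t).
Proof.
intros Ht. eapply is_derive_ext_loc. apply G1_loc; auto.
unfold G2. rewrite g_E by auto. auto_derive.
- repeat split; try exact I; exG.
- rewrite Derive_E, Derive_Q by auto. field. lra.
Qed.

Lemma G2_cont a b eps t : 0 < t -> continuous (G2 a b eps) t.
Proof.
intros Ht. apply (continuous_ext_loc _ (fun x => E a b eps x / x * (Q a b eps x * (Q a b eps x - 1) / x + Q1 b eps x))). apply G2_loc; auto.
apply (@ex_derive_continuous R_AbsRing R_NormedModule). auto_derive.
repeat split; try exact I; exG.
Qed.
Lemma G1_cont a b eps t : 0 < t -> continuous (G1 a b eps) t.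
Proof. intros; apply (@ex_derive_continuous R_AbsRing R_NormedModule); eexists; apply G1_derive; auto. Qed.

Lemma p1 u : 0 < u -> (u+1)^2*u^2 <= 3*(2+u^4).
Proof. intros. assert (0 <= (u^2-u)^2) by apply pow2_ge_0. assert (0 <= (u^2-1)^2) by apply pow2_ge_0. nra. Qed.
Lemma p3 u : 0 < u -> 4*u^3*(u+1) <= 8*(2+u^4).
Proof. intros. assert (0 <= (u^2-u)^2) by apply pow2_ge_0. assert (0 <= (u^2-1)^2) by apply pow2_ge_0.
assert (0 <= (u-1)^2) by apply pow2_ge_0. nra. Qed.
Lemma p2 u : 0 < u -> (u+1)^2*u^6 <= 3*(2+u^4)^2.
Proof. intros.
assert (h6 : 0 <= u^6) by (apply pow_le; lra).
assert (h4 : 0 <= u^4) by (apply pow_le; lra).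
assert (e: u^6 = u^4*u^2) by ring.
destruct (Rle_dec u 2).
- assert (u^2 <= 4) by nra.
  assert (u^6 <= 4 * u^4) by nra.
  assert (0 <= u^6 * (u - /2)^2) by (apply Rmult_le_pos; [lra|apply pow2_ge_0]).
  nra.
- assert (9/4 <= (u - /2)^2) by nra.
  assert (9/4*u^6 <= u^6 * (u - /2)^2) by nra.
  nra.
Qed.

Lemma absdiv N D K : 0 < D -> Rabs N <= K * D -> Rabs (N / D) <= K.
Proof.
intros HD HN. unfold Rdiv. rewrite Rabs_mult, Rabs_inv, (Rabs_pos_eq D) by lra.
apply Rle_div_l; auto.
Qed.

Lemma big_facts t : 1 < t ->
  hh t = (t-1)^4 /\ hh1 t = 4*(t-1)^3 /\ hh2 t = 12*(t-1)^2 /\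
  2 + (t-1)^4 <= S t /\ 0 <= ln t <= Lg t.
Proof.
intros Ht. unfold hh, hh1, hh2. destruct (Rle_dec t 1); [lra|].
assert (Hs : 2 + (t-1)^4 <= S t) by (unfold S, hh; destruct (Rle_dec t 1); [lra|]; generalize exp1_gt2; lra).
assert (0 <= ln t) by (rewrite <- ln_1; apply ln_le; lra).
assert (ln t <= Lg t).
{ unfold Lg. apply ln_le. lra.
  assert (0 <= ((t-1)^2-1)^2) by apply pow2_ge_0.
  assert (t - 1 <= 1 + (t-1)^4).
  { destruct (Rle_dec (t-1) 1). generalize (pow_le (t-1) 4); lra.
    assert (1 <= (t-1)^2) by nra. nra. }
  lra. }
repeat split; auto.
Qed.

Lemma bnd2 eps t : 0 < eps -> 0 < t -> Rabs (t * Phi1 eps t) <= 8 * eps.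
Proof.
intros He Ht. destruct (Rle_dec t 1).
- rewrite Phi1_le1 by auto. rewrite Rmult_0_r, Rabs_R0. lra.
- destruct (big_facts t) as (E0 & E1 & E2 & Hs & Hl); [lra|].
  unfold Phi1. rewrite E1.
  set (u := t - 1) in *. set (s := S t) in *. set (L := Lg t) in *.
  assert (Hu : 0 < u) by (unfold u; lra).
  assert (HL : 1 <= L) by apply Lg_ge1.
  assert (Hsp : 0 < s) by (generalize (pow_le u 4); lra).
  replace (t * (eps * (4 * u ^ 3 / (s * L)))) with ((eps * (4 * u^3 * (u+1))) / (s * L))
    by (unfold u; field; split; lra).
  apply absdiv. apply Rmult_lt_0_compat; lra.
  generalize (p3 u Hu); intro.
  assert (0 <= 4 * u^3 * (u+1)) by (generalize (pow_le u 3); nra).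
  rewrite Rabs_pos_eq by (apply Rmult_le_pos; lra).
  assert (8 * s <= 8 * (s * L)) by nra.
  replace (8 * eps * (s * L)) with (eps * (8 * (s * L))) by ring.
  apply Rmult_le_compat_l; lra.
Qed.

Lemma bnd1 eps t : 0 < eps -> 0 < t -> Rabs (t * ln t * Phi1 eps t) <= 8 * eps.
Proof.
intros He Ht. destruct (Rle_dec t 1).
- rewrite Phi1_le1 by auto. rewrite Rmult_0_r, Rabs_R0. lra.
- destruct (big_facts t) as (E0 & E1 & E2 & Hs & Hl); [lra|].
  unfold Phi1. rewrite E1.
  set (u := t - 1) in *. set (s := S t) in *. set (L := Lg t) in *. set (lt := ln t) in *.
  assert (Hu : 0 < u) by (unfold u; lra).
  assert (HL : 1 <= L) by apply Lg_ge1.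
  assert (Hsp : 0 < s) by (generalize (pow_le u 4); lra).
  replace (t * lt * (eps * (4 * u ^ 3 / (s * L)))) with ((eps * (4 * u^3 * (u+1) * lt)) / (s * L))
    by (unfold u; field; split; lra).
  apply absdiv. apply Rmult_lt_0_compat; lra.
  generalize (p3 u Hu); intro.
  assert (0 <= 4 * u^3 * (u+1)) by (generalize (pow_le u 3); nra).
  assert (4 * u^3 * (u+1) * lt <= (8 * s) * L) by (apply Rmult_le_compat; lra).
  assert (0 <= 4 * u^3 * (u+1) * lt) by (apply Rmult_le_pos; lra).
  rewrite Rabs_pos_eq by (apply Rmult_le_pos; lra).
  replace (8 * eps * (s * L)) with (eps * (8 * s * L)) by ring.
  apply Rmult_le_compat_l; lra.
Qed.

Lemma bnd4 eps t : 0 < eps -> 0 < t -> Rabs (t * t * ln t * (Phi1 eps t)^2) <= 48 * eps^2.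
Proof.
intros He Ht. destruct (Rle_dec t 1).
- rewrite Phi1_le1 by auto. replace (t * t * ln t * 0^2) with 0 by ring. rewrite Rabs_R0.
  generalize (pow2_ge_0 eps); lra.
- destruct (big_facts t) as (E0 & E1 & E2 & Hs & Hl); [lra|].
  unfold Phi1. rewrite E1.
  set (u := t - 1) in *. set (s := S t) in *. set (L := Lg t) in *. set (lt := ln t) in *.
  assert (Hu : 0 < u) by (unfold u; lra).
  assert (HL : 1 <= L) by apply Lg_ge1.
  assert (Hsp : 0 < s) by (generalize (pow_le u 4); lra).
  replace (t * t * lt * (eps * (4 * u ^ 3 / (s * L)))^2) with ((eps^2 * ((u+1)^2 * u^6 * (16 * lt))) / (s * L)^2)
    by (unfold u; field; split; lra).
  assert (HsL : 0 < s * L) by (apply Rmult_lt_0_compat; lra).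
  apply absdiv. apply pow_lt; lra.
  generalize (p2 u Hu); intro.
  assert (h2 : (2 + u^4)^2 <= s^2) by (generalize (pow_le u 4); intro; nra).
  assert (0 <= (u+1)^2 * u^6) by (apply Rmult_le_pos; apply pow_le; lra).
  assert (16 * lt <= 16 * L^2) by nra.
  assert ((u+1)^2 * u^6 * (16 * lt) <= (3 * s^2) * (16 * L^2)) by (apply Rmult_le_compat; lra).
  rewrite Rabs_pos_eq.
  + replace (48 * eps ^ 2 * (s * L) ^ 2) with (eps^2 * ((3 * s^2) * (16 * L^2))) by ring.
    apply Rmult_le_compat_l. apply pow2_ge_0. lra.
  + apply Rmult_le_pos. apply pow2_ge_0. apply Rmult_le_pos; lra.
Qed.

Lemma bnd3 eps t : 0 < eps -> 0 < t -> Rabs (t * t * ln t * Phi2 eps t) <= 132 * eps.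
Proof.
intros He Ht. destruct (Rle_dec t 1).
- rewrite Phi2_le1 by auto. rewrite Rmult_0_r, Rabs_R0. lra.
- destruct (big_facts t) as (E0 & E1 & E2 & Hs & Hl); [lra|].
  unfold Phi2. rewrite E1, E2.
  set (u := t - 1) in *. set (s := S t) in *. set (L := Lg t) in *. set (lt := ln t) in *.
  assert (Hu : 0 < u) by (unfold u; lra).
  assert (HL : 1 <= L) by apply Lg_ge1.
  assert (Hsp : 0 < s) by (generalize (pow_le u 4); lra).
  assert (HsL : 0 < s * L) by (apply Rmult_lt_0_compat; lra).
  replace (t * t * lt * (eps * (12 * u ^ 2 / (s * L) - 4 * u ^ 3 * (4 * u ^ 3 * (L + 1)) / (s * L) ^ 2)))
    with (eps * (((u+1)^2 * u^2 * (12 * lt)) / (s * L) - ((u+1)^2 * u^6 * (16 * lt * (L+1))) / (s * L)^2))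
    by (unfold u; field; split; lra).
  rewrite Rabs_mult, (Rabs_pos_eq eps) by lra.
  replace (132 * eps) with (eps * (36 + 96)) by ring.
  apply Rmult_le_compat_l; [lra|].
  unfold Rminus. eapply Rle_trans; [apply Rabs_triang|]. rewrite Rabs_Ropp.
  apply Rplus_le_compat.
  + apply absdiv; auto.
    generalize (p1 u Hu); intro.
    assert (0 <= (u+1)^2 * u^2) by (apply Rmult_le_pos; apply pow_le; lra).
    assert ((u+1)^2 * u^2 * (12 * lt) <= (3 * s) * (12 * L)) by (apply Rmult_le_compat; lra).
    rewrite Rabs_pos_eq by (apply Rmult_le_pos; lra). nra.
  + apply absdiv. apply pow_lt; lra.
    generalize (p2 u Hu); intro.
    assert (h2 : (2 + u^4)^2 <= s^2) by (generalize (pow_le u 4); intro; nra).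
    assert (0 <= (u+1)^2 * u^6) by (apply Rmult_le_pos; apply pow_le; lra).
    assert (16 * lt * (L+1) <= 16 * (2 * L^2)) by nra.
    assert (0 <= 16 * lt * (L+1)) by nra.
    assert ((u+1)^2 * u^6 * (16 * lt * (L+1)) <= (3 * s^2) * (16 * (2 * L^2))) by (apply Rmult_le_compat; lra).
    rewrite Rabs_pos_eq by (apply Rmult_le_pos; lra). nra.
Qed.

Lemma cos_mul_bound c X : Rabs (cos c * X) <= Rabs X.
Proof.
rewrite Rabs_mult. generalize (COS_bound c) (Rabs_pos X); intros [h1 h2] h3.
assert (Rabs (cos c) <= 1) by (apply Rabs_le; lra). nra.
Qed.
Lemma sin_mul_bound c X : Rabs (sin c * X) <= Rabs X.
Proof.
rewrite Rabs_mult. generalize (SIN_bound c) (Rabs_pos X); intros [h1 h2] h3.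
assert (Rabs (sin c) <= 1) by (apply Rabs_le; lra). nra.
Qed.

Lemma Q_bounds a b eps t : 0 < b -> 0 < eps -> 0 < t ->
  a - b - 8 * b * eps <= Q a b eps t <= a + b + 8 * b * eps.
Proof.
intros Hb He Ht. unfold Q, P, P1.
generalize (bnd1 eps t He Ht) (SIN_bound (Phi eps t)) (cos_mul_bound (Phi eps t) (t * ln t * Phi1 eps t)).
intros h1 [s1 s2] h3.
replace (t * ln t * (b * cos (Phi eps t) * Phi1 eps t)) with (b * (cos (Phi eps t) * (t * ln t * Phi1 eps t))) by ring.
set (X := cos (Phi eps t) * (t * ln t * Phi1 eps t)) in *.
assert (Rabs X <= 8 * eps) by lra.
apply Rabs_le_between in H. nra.
Qed.

Lemma tQ1_bound b eps t : 0 < b -> 0 < eps -> eps < 1 -> 0 < t ->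
  Rabs (t * Q1 b eps t) <= 204 * b * eps.
Proof.
intros Hb He He1 Ht. unfold Q1, P1, P2.
replace (t * (b * cos (Phi eps t) * Phi1 eps t + (ln t + 1) * (b * cos (Phi eps t) * Phi1 eps t) +
   t * ln t * (b * (- sin (Phi eps t) * Phi1 eps t ^ 2 + cos (Phi eps t) * Phi2 eps t))))
 with (b * (2 * (cos (Phi eps t) * (t * Phi1 eps t)) + cos (Phi eps t) * (t * ln t * Phi1 eps t)
        - sin (Phi eps t) * (t * t * ln t * Phi1 eps t ^ 2) + cos (Phi eps t) * (t * t * ln t * Phi2 eps t))) by ring.
rewrite Rabs_mult, (Rabs_pos_eq b) by lra.
replace (204 * b * eps) with (b * (16 * eps + 8 * eps + 48 * eps + 132 * eps)) by ring.
apply Rmult_le_compat_l; [lra|].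
generalize (cos_mul_bound (Phi eps t) (t * Phi1 eps t)) (bnd2 eps t He Ht).
generalize (cos_mul_bound (Phi eps t) (t * ln t * Phi1 eps t)) (bnd1 eps t He Ht).
generalize (sin_mul_bound (Phi eps t) (t * t * ln t * Phi1 eps t ^ 2)) (bnd4 eps t He Ht).
generalize (cos_mul_bound (Phi eps t) (t * t * ln t * Phi2 eps t)) (bnd3 eps t He Ht).
set (A1 := cos (Phi eps t) * (t * Phi1 eps t)).
set (A2 := cos (Phi eps t) * (t * ln t * Phi1 eps t)).
set (A3 := sin (Phi eps t) * (t * t * ln t * Phi1 eps t ^ 2)).
set (A4 := cos (Phi eps t) * (t * t * ln t * Phi2 eps t)).
intros.
assert (eps ^ 2 <= eps) by nra.
unfold Rminus.
eapply Rle_trans. apply Rabs_triang.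
eapply Rle_trans. apply Rplus_le_compat_r. apply Rabs_triang.
eapply Rle_trans. apply Rplus_le_compat_r. apply Rplus_le_compat_r. apply Rabs_triang.
rewrite Rabs_Ropp, Rabs_mult, (Rabs_pos_eq 2) by lra.
lra.
Qed.

Lemma gt_Rpower a b eps t : 0 < t -> g a b eps t / t = Rpower t (P a b eps t - 1).
Proof.
intros Ht. rewrite g_E by auto. unfold E, Rpower.
replace ((P a b eps t - 1) * ln t) with (P a b eps t * ln t + - ln t) by ring.
rewrite exp_plus, exp_Ropp, exp_ln by auto. reflexivity.
Qed.

Lemma P_le1 a b eps t : t <= 1 -> P a b eps t = a - b.
Proof.
intros. unfold P. rewrite Phi_le1 by auto.
replace (3/2*PI) with (PI/2 + PI) by field. rewrite neg_sin, sin_PI2. ring.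
Qed.

Lemma P_bounds a b eps t : 0 < b -> a - b <= P a b eps t <= a + b.
Proof. intros. unfold P. generalize (SIN_bound (Phi eps t)). nra. Qed.

Lemma gt_bounds a b eps t : 0 < b -> 0 < t ->
  Rpower t (a - b - 1) <= g a b eps t / t <= Rpower t (a - b - 1) + Rpower t (a + b - 1).
Proof.
intros Hb Ht. rewrite gt_Rpower by auto.
assert (0 < Rpower t (a + b - 1)) by (unfold Rpower; apply exp_pos).
assert (0 < Rpower t (a - b - 1)) by (unfold Rpower; apply exp_pos).
destruct (Rle_dec t 1).
- rewrite P_le1 by auto. replace (a - b - 1) with (a - b - 1) by ring. lra.
- generalize (P_bounds a b eps t Hb); intro.
  split. apply Rle_Rpower; lra.
  assert (Rpower t (P a b eps t - 1) <= Rpower t (a + b - 1)) by (apply Rle_Rpower; lra). lra.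
Qed.

Lemma lim_Rpower_0 c : 0 < c -> filterlim (fun t => Rpower t c) (at_right 0) (locally 0).
Proof.
intros Hc. unfold Rpower.
apply (filterlim_comp _ _ _ (fun t => c * ln t) exp _ (Rbar_locally m_infty)).
- apply (filterlim_comp _ _ _ ln (fun y => c * y) _ (Rbar_locally m_infty)).
  + apply is_lim_ln_0.
  + generalize (is_lim_scal_l (fun y => y) c m_infty m_infty (is_lim_id m_infty)).
    simpl. case (Rle_dec 0 c); intro h; [|lra]. case (Rle_lt_or_eq_dec 0 c h); intro h'; [|lra].
    auto.
- apply is_lim_exp_m.
Qed.

Lemma lim_Rpower_inf c : 0 < c -> filterlim (fun t => Rpower t c) (Rbar_locally p_infty) (Rbar_locally p_infty).
Proof.
intros Hc. unfold Rpower.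
apply (filterlim_comp _ _ _ (fun t => c * ln t) exp _ (Rbar_locally p_infty)).
- apply (filterlim_comp _ _ _ ln (fun y => c * y) _ (Rbar_locally p_infty)).
  + apply is_lim_ln_p.
  + generalize (is_lim_scal_l (fun y => y) c p_infty p_infty (is_lim_id p_infty)).
    simpl. case (Rle_dec 0 c); intro h; [|lra]. case (Rle_lt_or_eq_dec 0 c h); intro h'; [|lra].
    auto.
- apply is_lim_exp_p.
Qed.

Lemma at_right_01 : at_right 0 (fun t => 0 < t <= 1).
Proof.
exists (mkposreal 1 Rlt_0_1). intros y Hy Hy0.
unfold ball in Hy; simpl in Hy; unfold AbsRing_ball, abs, minus, plus, opp in Hy; simpl in Hy.
apply Rabs_def2 in Hy. lra.
Qed.

Lemma gt_small a b eps t : 0 < t <= 1 -> g a b eps t / t = Rpower t (a - b - 1).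
Proof. intros [h1 h2]. rewrite gt_Rpower by auto. rewrite P_le1 by auto. reflexivity. Qed.

Lemma lim_gt_0 a b eps : 1 < a - b ->
  filterlim (fun t => g a b eps t / t) (at_right 0) (locally 0).
Proof.
intros Hab. apply (filterlim_ext_loc (fun t => Rpower t (a - b - 1))).
- generalize at_right_01. apply filter_imp. intros t Ht. symmetry; apply gt_small; auto.
- apply lim_Rpower_0. lra.
Qed.

Lemma lim_gt_inf a b eps : 0 < b -> 1 < a - b ->
  filterlim (fun t => g a b eps t / t) (Rbar_locally p_infty) (Rbar_locally p_infty).
Proof.
intros Hb Hab. apply (filterlim_ge_p_infty (fun t => Rpower t (a - b - 1))).
- exists 0. intros t Ht. apply gt_bounds; auto.
- apply lim_Rpower_inf. lra.
Qed.

Lemma Q_small a b eps t : 0 < t <= 1 -> Q a b eps t = a - b.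
Proof.
intros [h1 h2]. unfold Q, P1. rewrite Phi1_le1, P_le1 by auto. ring.
Qed.

Lemma G1_0 a b eps : G1 a b eps 0 = 0.
Proof.
unfold G1, g. destruct (Rlt_dec 0 0); [lra|]. unfold Rdiv; ring.
Qed.

Lemma lim_G1_0 a b eps : 1 < a - b ->
  filterlim (G1 a b eps) (at_right 0) (locally 0).
Proof.
intros Hab. apply (filterlim_ext_loc (fun t => Rpower t (a - b - 1) * (a - b))).
- generalize at_right_01. apply filter_imp. intros t Ht.
  unfold G1. rewrite Q_small by auto. rewrite <- (gt_small a b eps t Ht).
  field. lra.
- apply (filterlim_comp _ _ _ (fun t => Rpower t (a - b - 1)) (fun x => x * (a - b)) _ (locally 0)).
  + apply lim_Rpower_0. lra.
  + replace 0 with (0 * (a - b)) at 2 by ring.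
    apply (continuous_mult (fun x : R => x) (fun _ => a - b)).
    apply continuous_id. apply continuous_const.
Qed.

Lemma lim_diff_0 a b eps : 1 < a - b ->
  filterlim (fun h => (g a b eps h - g a b eps 0) / h) (at_right 0) (locally (G1 a b eps 0)).
Proof.
intros Hab. rewrite G1_0.
apply (filterlim_ext (fun t => g a b eps t / t)).
- intros t. assert (g a b eps 0 = 0) by (unfold g; destruct (Rlt_dec 0 0); lra). rewrite H, Rminus_0_r. reflexivity.
- apply lim_gt_0; auto.
Qed.

Lemma g_cont0 a b eps : 1 < a - b -> continuity_pt (g a b eps) 0.
Proof.
intros Hab e He.
exists (Rmin e 1). split. apply Rmin_pos; lra.
intros x [_ Hx]. simpl in *. unfold Rdist in *.
assert (g a b eps 0 = 0) by (unfold g; destruct (Rlt_dec 0 0); lra). rewrite H, Rminus_0_r. rewrite Rminus_0_r in Hx.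
unfold g. destruct (Rlt_dec 0 x).
- assert (Hx1 : x < 1) by (generalize (Rmin_r e 1); apply Rabs_def2 in Hx; lra).
  assert (Hxe : x < e) by (generalize (Rmin_l e 1); apply Rabs_def2 in Hx; lra).
  assert (E1 : g a b eps x = x * Rpower x (a - b - 1)).
  { rewrite <- (gt_small a b eps x) by lra. field. lra. }
  unfold g in E1. destruct (Rlt_dec 0 x); [|lra]. rewrite E1.
  assert (Rpower x (a - b - 1) <= 1).
  { unfold Rpower.
    assert (ln x < 0) by (rewrite <- ln_1; apply ln_increasing; lra).
    assert (exp ((a-b-1)*ln x) < exp 0) by (apply exp_increasing; nra). rewrite exp_0 in H1. lra. }
  assert (0 < Rpower x (a - b - 1)) by (unfold Rpower; apply exp_pos).
  rewrite Rabs_pos_eq by nra. nra.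
- rewrite Rabs_R0. auto.
Qed.

Lemma cont_of_der f c l : is_derive f c l -> continuity_pt f c.
Proof.
intros H. apply continuity_pt_filterlim.
apply (@ex_derive_continuous R_AbsRing R_NormedModule). exists l; auto.
Qed.

Lemma mvt_strict (f df : R -> R) x y : x < y ->
  (forall c, x < c < y -> is_derive f c (df c)) ->
  (forall c, x <= c <= y -> continuity_pt f c) ->
  exists c, x < c < y /\ f y - f x = df c * (y - x).
Proof.
intros Hxy Hd Hc.
pose (pr1 := fun c (H : x < c < y) => exist (fun l => derivable_pt_abs f c l) (df c)
                (proj1 (is_derive_Reals _ _ _) (Hd c H)) : derivable_pt f c).
pose (pr2 := fun c (_ : x < c < y) => derivable_pt_id c).
destruct (MVT f id x y pr1 pr2 Hxy Hc) as [c [P HP]].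
- intros c _. apply derivable_continuous_pt. apply derivable_pt_id.
- exists c. split; auto.
  unfold pr2 in HP. rewrite derive_pt_id in HP. simpl in HP. unfold id in HP. lra.
Qed.

Lemma strict_conv (G G1 G2 : R -> R) :
  (forall t, 0 < t -> is_derive G t (G1 t)) ->
  (forall t, 0 < t -> is_derive G1 t (G2 t)) ->
  (forall t, 0 < t -> 0 < G2 t) ->
  continuity_pt G 0 ->
  forall x y l, 0 <= x -> 0 <= y -> x <> y -> 0 < l < 1 ->
  G (l * x + (1 - l) * y) < l * G x + (1 - l) * G y.
Proof.
intros D1 D2 Pos C0.
assert (Hc : forall c, 0 <= c -> continuity_pt G c).
{ intros c Hc. destruct (Rle_lt_or_eq_dec 0 c Hc) as [h|h].
  - eapply cont_of_der; apply D1; auto.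
  - subst; auto. }
assert (Main : forall x y l, 0 <= x -> x < y -> 0 < l < 1 ->
  G (l * x + (1 - l) * y) < l * G x + (1 - l) * G y).
{ intros x y l Hx Hxy Hl.
  set (z := l * x + (1 - l) * y).
  assert (Hz1 : x < z) by (unfold z; nra).
  assert (Hz2 : z < y) by (unfold z; nra).
  destruct (mvt_strict G G1 x z Hz1) as [c1 [Hc1 E1]].
  { intros c Hc'. apply D1; lra. }
  { intros c Hc'. apply Hc; lra. }
  destruct (mvt_strict G G1 z y Hz2) as [c2 [Hc2 E2]].
  { intros c Hc'. apply D1; lra. }
  { intros c Hc'. apply Hc; lra. }
  assert (Hlt : c1 < c2) by lra.
  destruct (mvt_strict G1 G2 c1 c2 Hlt) as [d [Hd E3]].
  { intros c Hc'. apply D2; lra. }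
  { intros c Hc'. eapply cont_of_der; apply D2; lra. }
  assert (0 < G2 d) by (apply Pos; lra).
  assert (0 < G1 c2 - G1 c1) by (rewrite E3; apply Rmult_lt_0_compat; lra).
  assert (Ez1 : z - x = (1 - l) * (y - x)) by (unfold z; ring).
  assert (Ez2 : y - z = l * (y - x)) by (unfold z; ring).
  assert (l * G x + (1 - l) * G y - G z = l * (1 - l) * (y - x) * (G1 c2 - G1 c1)).
  { replace (l * G x + (1 - l) * G y - G z) with (- l * (G z - G x) + (1 - l) * (G y - G z)) by ring.
    rewrite E1, E2, Ez1, Ez2. ring. }
  assert (0 < l * (1 - l) * (y - x) * (G1 c2 - G1 c1)).
  { apply Rmult_lt_0_compat; [|lra]. apply Rmult_lt_0_compat; [|lra]. apply Rmult_lt_0_compat; lra. }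
  lra. }
intros x y l Hx Hy Hxy Hl.
destruct (Rlt_dec x y) as [h|h].
- apply Main; auto.
- assert (y < x) by lra.
  replace (l * x + (1 - l) * y) with ((1 - l) * y + (1 - (1 - l)) * x) by ring.
  replace (l * G x + (1 - l) * G y) with ((1 - l) * G y + (1 - (1 - l)) * G x) by ring.
  apply Main; auto; lra.
Qed.

Lemma w_pos a b eps t : 0 < t -> 0 < g a b eps t / t.
Proof. intros; rewrite gt_Rpower by auto; unfold Rpower; apply exp_pos. Qed.

Lemma vi_bounds a b eps t : 0 < b -> 0 < eps -> eps < 1 -> 224 * b * eps < a - 1 - b -> 0 < t ->
  0 < (- 224 * b * eps + a - 1 - b) * (G1 a b eps t / t) /\
  (- 224 * b * eps + a - 1 - b) * (G1 a b eps t / t) <= G2 a b eps t /\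
  G2 a b eps t <= (224 * b * eps + a - 1 + b) * (G1 a b eps t / t).
Proof.
intros Hb He He1 Hk Ht.
generalize (w_pos a b eps t Ht) (Q_bounds a b eps t Hb He Ht) (tQ1_bound b eps t Hb He He1 Ht).
intros Hw HQ HT.
assert (E1 : G1 a b eps t / t = (g a b eps t / t / t) * Q a b eps t) by (unfold G1; field; lra).
assert (E2 : G2 a b eps t = (g a b eps t / t / t) * (Q a b eps t * (Q a b eps t - 1) + t * Q1 b eps t))
  by (unfold G2; field; lra).
rewrite E1, E2.
set (v := g a b eps t / t / t).
assert (Hv : 0 < v) by (unfold v; apply Rdiv_lt_0_compat; lra).
set (q := Q a b eps t) in *. set (T := t * Q1 b eps t) in *.
apply Rabs_le_between in HT.
assert (Hbe : 0 < b * eps) by nra.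
assert (Hq1 : 1 <= q) by lra.
assert (h1 : q * (a - b - 8 * b * eps - 1) <= q * (q - 1)) by (apply Rmult_le_compat_l; lra).
assert (h2 : q * (q - 1) <= q * (a + b + 8 * b * eps - 1)) by (apply Rmult_le_compat_l; lra).
assert (h3 : 204 * b * eps <= 204 * b * eps * q) by nra.
split; [|split].
- apply Rmult_lt_0_compat; [lra|]. apply Rmult_lt_0_compat; lra.
- replace ((-224 * b * eps + a - 1 - b) * (v * q)) with (v * ((-224 * b * eps + a - 1 - b) * q)) by ring.
  apply Rmult_le_compat_l; lra.
- replace ((224 * b * eps + a - 1 + b) * (v * q)) with (v * ((224 * b * eps + a - 1 + b) * q)) by ring.
  apply Rmult_le_compat_l; lra.
Qed.

Theorem theorem2p1 (a b eps : R) (ha : 0 < a) (hb : 0 < b) (hab : 1 < a - b)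
  (heps0 : 0 < eps) (heps1 : eps < Rmin 1 ((a - 1 - b) / (224 * b))) :
  let G := g a b eps in
  (* (i) *)
  ((forall t, 0 <= t -> 0 <= G t) /\ G 0 = 0 /\ (forall t, 0 < t -> 0 < G t)) /\
  (* (ii) + (iii) g'(0)=0 + (iv)-(vi): G1 = g', G2 = g'' *)
  (exists G1 G2 : R -> R,
     (* G1 is the derivative of G on (0,+oo) and the right derivative at 0 *)
     (forall t, 0 < t -> is_derive G t (G1 t)) /\
     filterlim (fun h => (G h - G 0) / h) (at_right 0) (locally (G1 0)) /\
     (* G1 continuous on [0,+oo): right-continuous at 0, continuous at t > 0 *)
     filterlim G1 (at_right 0) (locally (G1 0)) /\
     (forall t, 0 < t -> continuous G1 t) /\
     (* C^2 on (0,+oo) *)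
     (forall t, 0 < t -> is_derive G1 t (G2 t)) /\
     (forall t, 0 < t -> continuous G2 t) /\
     (* (iii) g'(0) = 0 *)
     G1 0 = 0 /\
     (* (iv) *)
     (forall t, 0 < t ->
        0 < (- 8 * b * eps + a - b) * (G t / t) /\
        (- 8 * b * eps + a - b) * (G t / t) <= G1 t /\
        G1 t <= (8 * b * eps + a + b) * (G t / t)) /\
     (* (v) *)
     (forall t, 0 < t ->
        0 < (- 8 * b * eps + a - b) * Rpower t (a - b - 1) /\
        (- 8 * b * eps + a - b) * Rpower t (a - b - 1) <= G1 t /\
        G1 t <= (8 * b * eps + a + b) *
                  (Rpower t (a - b - 1) + Rpower t (a + b - 1))) /\
     (* (vi) *)
     (forall t, 0 < t ->
        0 < (- 224 * b * eps + a - 1 - b) * (G1 t / t) /\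
        (- 224 * b * eps + a - 1 - b) * (G1 t / t) <= G2 t /\
        G2 t <= (224 * b * eps + a - 1 + b) * (G1 t / t))) /\
  (* (iii) limits *)
  filterlim (fun t => G t / t) (at_right 0) (locally 0) /\
  filterlim (fun t => G t / t) (Rbar_locally p_infty) (Rbar_locally p_infty) /\
  (* (vii) strict convexity on [0,+oo) *)
  (forall x y l, 0 <= x -> 0 <= y -> x <> y -> 0 < l < 1 ->
     G (l * x + (1 - l) * y) < l * G x + (1 - l) * G y).
Proof.
cbv zeta.
assert (He1 : eps < 1) by (generalize (Rmin_l 1 ((a - 1 - b) / (224 * b))); lra).
assert (Hk : 224 * b * eps < a - 1 - b).
{ generalize (Rmin_r 1 ((a - 1 - b) / (224 * b))); intro.
  assert (eps < (a - 1 - b) / (224 * b)) by lra.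
  apply Rlt_div_r in H0; [|lra]. lra. }
assert (Hbe : 0 < b * eps) by nra.
assert (Hlo : 0 < - 8 * b * eps + a - b) by lra.
assert (G1Q : forall t, 0 < t -> G1 a b eps t = Q a b eps t * (g a b eps t / t)).
{ intros t Ht. unfold G1. field. lra. }
assert (Hvi : forall t, 0 < t ->
  0 < (- 224 * b * eps + a - 1 - b) * (G1 a b eps t / t) /\
  (- 224 * b * eps + a - 1 - b) * (G1 a b eps t / t) <= G2 a b eps t /\
  G2 a b eps t <= (224 * b * eps + a - 1 + b) * (G1 a b eps t / t)).
{ intros; apply vi_bounds; auto. }
split; [|split; [|split; [|split]]].
- split; [|split].
  + intros t Ht. unfold g. destruct (Rlt_dec 0 t). unfold Rpower; left; apply exp_pos. lra.
  + unfold g. destruct (Rlt_dec 0 0); lra.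
  + intros t Ht. unfold g. destruct (Rlt_dec 0 t); [|lra]. unfold Rpower; apply exp_pos.
- exists (G1 a b eps), (G2 a b eps).
  split; [intros; apply G_derive; auto|].
  split; [apply lim_diff_0; auto|].
  split; [rewrite G1_0; apply lim_G1_0; auto|].
  split; [intros; apply G1_cont; auto|].
  split; [intros; apply G1_derive; auto|].
  split; [intros; apply G2_cont; auto|].
  split; [apply G1_0|].
  split; [|split; [|exact Hvi]].
  + intros t Ht. generalize (w_pos a b eps t Ht) (Q_bounds a b eps t hb heps0 Ht); intros Hw HQ.
    rewrite G1Q by auto.
    split; [apply Rmult_lt_0_compat; lra|].
    split; apply Rmult_le_compat_r; lra.
  + intros t Ht. generalize (w_pos a b eps t Ht) (Q_bounds a b eps t hb heps0 Ht) (gt_bounds a b eps t hb Ht); intros Hw HQ HB.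
    rewrite G1Q by auto.
    assert (0 < Rpower t (a - b - 1)) by (unfold Rpower; apply exp_pos).
    split; [apply Rmult_lt_0_compat; lra|].
    split.
    * apply Rle_trans with ((- 8 * b * eps + a - b) * (g a b eps t / t)).
      apply Rmult_le_compat_l; lra. apply Rmult_le_compat_r; lra.
    * apply Rle_trans with ((8 * b * eps + a + b) * (g a b eps t / t)).
      apply Rmult_le_compat_r; lra. apply Rmult_le_compat_l; lra.
- apply lim_gt_0; auto.
- apply lim_gt_inf; auto.
- apply (strict_conv (g a b eps) (G1 a b eps) (G2 a b eps)).
  + intros; apply G_derive; auto.
  + intros; apply G1_derive; auto.
  + intros t Ht. destruct (Hvi t Ht) as [h1 [h2 h3]]. lra.
  + apply g_cont0; auto.
Qed.
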